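(* Let $\mathbb{Q}\subset K$ be a totally real Galois extension of finite degree. Then $\overline{N}_{K/\mathbb{Q}}=\mathbb{Q}$.
   Context: $\overline{N}_{K/\mathbb{Q}}$ is the set of all finite sums $\sum_iN_{K/\mathbb{Q}}(a_i)$ with $a_i\in K$, where $N_{K/\mathbb{Q}}$ is the field norm. A number field is totally real if all its embeddings into $\mathbb{C}$ land in $\mathbb{R}$. *)

(* Defs.v *)
From HB Require Import structures.
From mathcomp Require Import all_boot all_order all_algebra all_field.
Set Implicit Arguments. Unset Strict Implicit. Unset Printing Implicit Defensive.
Import GRing.Theory Num.Theory.
Local Open Scope ring_scope.

(* A number field K is modelled as L : fieldExtType rat (finite dimensional
   field extension of Q); a finite Galois extension of Q is a
   L : splittingFieldType rat (normal, hence Galois in char 0).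
   Complex embeddings of a number field land in algebraic numbers, so we use
   algC as the complex numbers. *)

Definition totally_real (L : fieldExtType rat) : Prop :=
  forall (f : {rmorphism L -> algC}) (x : L), f x \is Num.real.

(* The field norm N_{K/Q}, for K/Q Galois: product of all Galois conjugates. *)
Definition normKQ (L : splittingFieldType rat) (a : L) : L :=
  galNorm 1%VS fullv a.

Definition in_sum_norms (L : splittingFieldType rat) (x : L) : Prop :=
  exists s : seq L, x = \sum_(a <- s) normKQ a.

(* Main.v *)
Require Import Defs.
From HB Require Import structures.
From mathcomp Require Import all_boot all_order all_algebra all_field.
Import Order.TTheory GRing.Theory Num.Theory.
Local Open Scope ring_scope.
From mathcomp Require Import ring.
Local Open Scope ring_scope.
Set Implicit Arguments. Unset Strict Implicit. Unset Printing Implicit Defensive.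
Lemma rat_between (x y : algC) : x \is Num.real -> x < y ->
  exists q : rat, x < ratr q < y.
Proof.
move=> xR lxy.
have d0 : 0 < y - x by rewrite subr_gt0.
set N := Num.bound (y - x)^-1.
have hN : (y - x)^-1 < N%:R by apply: archi_boundP; rewrite invr_ge0 ltW.
have N0 : (0 : algC) < N%:R by apply: le_lt_trans hN; rewrite invr_ge0 ltW.
set k := (Num.floor (x * N%:R) + 1)%R.
have xNR : x * N%:R \is Num.real by rewrite realM // realn.
have h1 : x * N%:R < k%:~R by apply: real_floorD1_gt.
have h2 : (k%:~R : algC) <= x * N%:R + 1.
  by rewrite /k rmorphD /= lerD2r real_floor_le.
have dN : 1 < (y - x) * N%:R.
  by rewrite -ltr_pdivrMl // mulr1.
exists (k%:~R / N%:R).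
rewrite fmorph_div /= ratr_int ratr_nat.
rewrite ltr_pdivlMr // ltr_pdivrMr // h1 /=.
apply: (le_lt_trans h2).
by rewrite mulrBl in dN; rewrite -ltrBrDl.
Qed.
Section Embed.
Variable L : fieldExtType rat.

Definition ratof (x : L) : rat := coord [tuple 1] 0 x.

Lemma ratofK x : x \in 1%VS -> (ratof x)%:A = x.
Proof.
move=> x1.
have : x \in span [tuple (1 : L)] by rewrite span_seq1.
move/coord_span => {2}->; rewrite big_ord1 /=; done.
Qed.

Lemma ratof_alg c : ratof (c%:A) = c.
Proof.
apply: (fmorph_inj (in_alg L)); rewrite /= ?in_algE ratofK //.
by rewrite rpredZ // mem1v.
Qed.

Definition toQ (p : {poly L}) : {poly rat} := map_poly ratof p.

Lemma toQ_map q : toQ (map_poly (in_alg L) q) = q.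
Proof.
apply/polyP => i; rewrite /toQ coef_map_id0 ?coef_map /=.
  by rewrite ratof_alg.
by rewrite /ratof linear0.
Qed.

Lemma toQK p : p \is a polyOver 1%VS -> map_poly (in_alg L) (toQ p) = p.
Proof.
move/polyOverP => Hp; apply/polyP => i.
rewrite coef_map /toQ coef_map_id0; last by rewrite /ratof linear0.
by rewrite /= ?in_algE ratofK.
Qed.

Lemma toQ_unique p q : map_poly (in_alg L) q = p -> toQ p = q.
Proof. by move<-; rewrite toQ_map. Qed.

Variable th : L.
Hypothesis Hth : <<1%VS; th>>%VS = fullv.
Variable z : algC.
Hypothesis Hz : root (map_poly ratr (toQ (minPoly 1%VS th))) z.

Definition ev (q : {poly rat}) : algC := (map_poly ratr q).[z].

Lemma ev_root Q : Q \is a polyOver 1%VS -> root Q th -> ev (toQ Q) = 0.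
Proof.
move=> HQ rQ.
have hd : toQ (minPoly 1%VS th) %| toQ Q.
  rewrite -(dvdp_map (in_alg L)) !toQK ?minPolyOver //.
  exact: minPoly_dvdp.
rewrite /ev -(divpK hd) rmorphM /= hornerM.
by move/rootP: Hz => ->; rewrite mulr0.
Qed.

Definition emb (y : L) : algC := ev (toQ (Fadjoin_poly 1%VS th y)).

Lemma emb_eval Q y : Q \is a polyOver 1%VS -> Q.[th] = y -> emb y = ev (toQ Q).
Proof.
move=> HQ Qy.
have HF := Fadjoin_polyOver 1%VS th y.
have : ev (toQ (Q - Fadjoin_poly 1%VS th y)) = 0.
  apply: ev_root; first by rewrite rpredB.
  by rewrite /root hornerD hornerN Qy Fadjoin_poly_eq ?Hth ?memvf // subrr.
rewrite (@toQ_unique _ (toQ Q - toQ (Fadjoin_poly 1%VS th y))); last first.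
  by rewrite rmorphB /= !toQK.
by rewrite /ev rmorphB /= hornerD hornerN => /eqP; rewrite subr_eq0 => /eqP.
Qed.

Lemma toQ_polyOver_B A B : A \is a polyOver 1%VS -> B \is a polyOver 1%VS ->
  toQ (A - B) = toQ A - toQ B.
Proof. by move=> hA hB; apply: toQ_unique; rewrite rmorphB /= !toQK. Qed.

Lemma toQ_polyOver_M A B : A \is a polyOver 1%VS -> B \is a polyOver 1%VS ->
  toQ (A * B) = toQ A * toQ B.
Proof. by move=> hA hB; apply: toQ_unique; rewrite rmorphM /= !toQK. Qed.

Lemma ev_is_ring : ev 1 = 1 /\ (forall p q, ev (p * q) = ev p * ev q)
   /\ (forall p q, ev (p - q) = ev p - ev q).
Proof.
rewrite /ev; split; first by rewrite rmorph1 hornerC.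
split=> p q; first by rewrite rmorphM hornerM.
by rewrite rmorphB /= hornerD hornerN.
Qed.

Lemma emb_is_zmod : zmod_morphism emb.
Proof.
move=> x y; have HFx := Fadjoin_polyOver 1%VS th x.
have HFy := Fadjoin_polyOver 1%VS th y.
rewrite (@emb_eval (Fadjoin_poly 1%VS th x - Fadjoin_poly 1%VS th y)).
- by rewrite toQ_polyOver_B // (proj2 (proj2 ev_is_ring)).
- by rewrite rpredB.
by rewrite hornerD hornerN !Fadjoin_poly_eq ?Hth ?memvf.
Qed.

Lemma emb_is_monoid : monoid_morphism emb.
Proof.
split.
  rewrite (@emb_eval 1); first by rewrite (@toQ_unique _ 1) ?rmorph1 // (proj1 ev_is_ring).
    by rewrite rpred1.
  by rewrite hornerC.
move=> x y; have HFx := Fadjoin_polyOver 1%VS th x.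
have HFy := Fadjoin_polyOver 1%VS th y.
rewrite (@emb_eval (Fadjoin_poly 1%VS th x * Fadjoin_poly 1%VS th y)).
- by rewrite toQ_polyOver_M // (proj1 (proj2 ev_is_ring)).
- by rewrite rpredM.
by rewrite hornerM !Fadjoin_poly_eq ?Hth ?memvf.
Qed.

HB.instance Definition _ := GRing.isZmodMorphism.Build L algC emb emb_is_zmod.
HB.instance Definition _ := GRing.isMonoidMorphism.Build L algC emb emb_is_monoid.

Definition embR : {rmorphism L -> algC} := emb.
End Embed.

Lemma emb_exists (L : fieldExtType rat) (th : L) :
  <<1%VS; th>>%VS = fullv -> exists f : {rmorphism L -> algC}, True.
Proof.
move=> Hth.
have : size (map_poly (ratr : rat -> algC) (toQ (minPoly 1%VS th))) != 1%N.
  rewrite size_map_poly -(size_map_poly (in_alg L)) toQK ?minPolyOver //.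
  by rewrite size_minPoly /adjoin_degree.
case/closed_rootP => z Hz.
by exists (embR Hth Hz).
Qed.

Lemma seq_min (T : eqType) (s : seq T) (g : T -> algC) :
  s != [::] -> (forall i, i \in s -> g i \is Num.real) ->
  exists2 i, i \in s & forall j, j \in s -> g i <= g j.
Proof.
elim: s => // a s IH _ hR.
have ha : g a \is Num.real by apply: hR; rewrite mem_head.
case: (altP (s =P [::])) => [-> | sn0].
  by exists a; rewrite ?mem_head // => j; rewrite inE => /eqP->.
have [i iS hi] : exists2 i, i \in s & forall j, j \in s -> g i <= g j.
  by apply: IH => // j js; apply: hR; rewrite inE js orbT.
have iR : g i \is Num.real by apply: hR; rewrite inE iS orbT.
case/orP: (real_leVge ha iR) => hai.
  exists a; first by rewrite mem_head.
  move=> j; rewrite inE => /orP[/eqP-> //| js].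
  exact: le_trans hai (hi j js).
exists i; first by rewrite inE iS orbT.
by move=> j; rewrite inE => /orP[/eqP-> //| js]; apply: hi.
Qed.

Section Main.
Variable L : splittingFieldType rat.
Hypothesis hG : galois 1%VS (fullv : {vspace L}).

Local Notation G := ('Gal((fullv : {vspace L}) / 1%VS))%g.

Lemma normQ (a : L) : normKQ a \in 1%VS.
Proof.
move/galois_fixedField: hG => hfix.
rewrite /normKQ -{2}hfix; exact: galNorm_fixedField (memvf a).
Qed.

Lemma normC (c : rat) : normKQ (c%:A : L) = (c ^+ #|G|)%:A.
Proof.
rewrite /normKQ /galNorm.
rewrite (eq_bigr (fun _ => c%:A)); last first.
  by move=> s sG; rewrite (fixed_gal (sub1v _) sG) // rpredZ // mem1v.
by rewrite prodr_const -!in_algE rmorphXn.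
Qed.

Lemma normM (a b : L) : normKQ (a * b) = normKQ a * normKQ b.
Proof. exact: galNormM. Qed.

Lemma sum_nseq (m : nat) (w : L) :
  \sum_(a <- nseq m w) normKQ a = m%:R * normKQ w.
Proof.
elim: m => [|m IH]; first by rewrite big_nil mul0r.
by rewrite /= big_cons IH mulrSr mulrDl mul1r addrC.
Qed.

Lemma pos_rep (c : rat) : 0 < c ->
  exists m : nat, exists w : L, (c%:A : L) = m%:R * normKQ w.
Proof.
move=> c0.
set a := numq c; set b := denq c.
have a0 : 0 < a by rewrite numq_gt0.
have b0 : 0 < b := denq_gt0 c.
have n0 : (0 < #|G|)%N := fingroup.cardG_gt0 _.
exists (`|a| * `|b| ^ (#|G|.-1))%N, ((b%:~R)^-1 : rat)%:A.
set m := (`|a| * `|b| ^ (#|G|.-1))%N.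
have e1 : (m%:R : L) = (m%:R : rat)%:A by rewrite -in_algE rmorph_nat.
rewrite normC e1 -scalerAl mul1r scalerA.
congr (_ %:A).
rewrite -{1}(divq_num_den c) -/a -/b natrM natrX.
rewrite !natr_absz !gtr0_norm //.
have [k hk] : exists k, #|G| = k.+1 by exists #|G|.-1; rewrite prednK.
rewrite hk /=.
have bn : (b%:~R : rat) != 0 by rewrite intr_eq0 gt_eqF.
rewrite exprVn exprS.
field.
by apply/andP; split; [exact: expf_neq0 | exact: bn].
Qed.

Lemma scal_mul (u v : rat) : (u%:A : L) * v%:A = (u * v)%:A.
Proof. by rewrite -scalerAl mul1r scalerA. Qed.

Lemma gal_eq_th (th : L) : <<1%VS; th>>%VS = fullv ->
  forall s t, s \in G -> t \in G -> s th = t th -> s = t.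
Proof.
move=> Hth s t sG tG hst; apply/eqP/gal_eqP => w _.
have : w \in <<1%VS; th>>%VS by rewrite Hth memvf.
case/Fadjoin_polyP => p Kp ->.
by rewrite -!horner_map !(fixedPoly_gal (sub1v _)) //= hst.
Qed.

Lemma neg_norm : totally_real L ->
  exists e : L, exists v : rat, v < 0 /\ normKQ e = v%:A.
Proof.
move=> hTR.
have n0 : (0 < #|G|)%N := fingroup.cardG_gt0 _.
case: (ltnP 1 #|G|) => hn; last first.
  have h1 : #|G| = 1%N by apply/eqP; rewrite eqn_leq hn n0.
  exists (-1), (-1); split => //.
  have e : (-1 : L) = (-1 : rat)%:A by rewrite scaleN1r.
  by rewrite e normC h1 expr1.
case/and3P: hG => _ hsep _.
pose th := separable_generator (1%VS : {vspace L}) fullv.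
have Hth : <<1%VS; th>>%VS = fullv.
  by symmetry; exact: eq_adjoin_separable_generator hsep (sub1v _).
have [f _] := emb_exists Hth.
pose g (s : gal_of fullv) := f (s th).
have gR : forall s, g s \is Num.real := fun s => hTR f (s th).
have [s0 s0G hs0] : exists2 s0, s0 \in enum G & forall j, j \in enum G -> g s0 <= g j.
  apply: seq_min => //.
  by rewrite -size_eq0 -cardE -lt0n.
rewrite mem_enum in s0G.
have [s1 s1G hs1] : exists2 s1, s1 \in enum (G :\ s0) &
    forall j, j \in enum (G :\ s0) -> g s1 <= g j.
  apply: seq_min => //.
  rewrite -size_eq0 -cardE -lt0n.
  by move: hn; rewrite (cardsD1 s0) s0G.
rewrite mem_enum in_setD1 in s1G; case/andP: s1G => s10 s1G.
have lt01 : g s0 < g s1.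
  rewrite lt_neqAle hs0 ?mem_enum // andbT.
  apply: contra s10 => /eqP /fmorph_inj h.
  by apply/eqP; symmetry; apply: (gal_eq_th Hth).
have [q /andP[q0 q1]] := rat_between (gR s0) lt01.
set e := th - q%:A.
have fq : f (q%:A) = ratr q by rewrite rmorphZ_num rmorph1 mulr1.
have hnorm : f (normKQ e) = \prod_(s in G) (g s - ratr q).
  rewrite /normKQ /galNorm rmorph_prod; apply: eq_bigr => s sG.
  have hsq : s (q%:A) = q%:A.
    by apply: (fixed_gal (sub1v _) sG); rewrite rpredZ ?mem1v.
  by rewrite !rmorphB /= hsq fq.
have neg : f (normKQ e) < 0.
  rewrite hnorm (bigD1 s0) //= pmulr_llt0 ?subr_lt0 //.
  apply: prodr_gt0 => s /andP[sG ss0].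
  rewrite subr_gt0; apply: lt_le_trans q1 _.
  by apply: hs1; rewrite mem_enum in_setD1 ss0.
have hv := ratofK (normQ e).
exists e, (ratof (normKQ e)); split => //.
have fr : forall r : rat, f (r%:A) = ratr r.
  by move=> r; rewrite rmorphZ_num rmorph1 mulr1.
by rewrite -(ltrq0 algC) -fr hv.
Qed.
End Main.

Theorem mainTheorem10 (L : splittingFieldType rat) :
  galois 1%VS (fullv : {vspace L}) -> totally_real L ->
  forall x : L, in_sum_norms x <-> x \in 1%VS.
Proof.
move=> hG hTR x; split.
  case=> s ->; apply: rpred_sum => a _; exact: normQ.
move=> x1; rewrite -(ratofK x1); set c := ratof x.
case: (ltrgtP c 0) => hc.
- have [e [v [v0 he]]] := @neg_norm L hG hTR.
  have cv : 0 < c / v by rewrite -mulrNN -invrN divr_gt0 // oppr_gt0.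
  have [m [w hw]] := @pos_rep L _ cv.
  exists (nseq m (e * w)); rewrite sum_nseq normM he mulrCA -hw scal_mul.
  by rewrite mulrC divfK // lt_eqF.
- have [m [w hw]] := @pos_rep L _ hc.
  by exists (nseq m w); rewrite sum_nseq.
- by exists [::]; rewrite big_nil hc scale0r.
Qed.
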